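(* For $0\le i\le n$ and integers $d,p$: if $(d+1,p)\in DP_i$ and $(d,p)\ge(0,\pi_0)$, then $(d,p)\in DP_i$.
   Context: Let $x_0\le x_1\le\cdots\le x_{n+1}$ be real numbers, $\{x\}=x-\lfloor x\rfloor$, and let $\pi=(\pi_0,\dots,\pi_{n+1})$ be the permutation of $\{0,\dots,n+1\}$ such that for $0\le i<j\le n+1$, $\pi_i>\pi_j$ iff $(\{x_i\},-x_i,i)<(\{x_j\},-x_j,j)$ lexicographically. For a sequence of indices $s_0<\cdots<s_k$, a drop is a consecutive pair $(s_{h-1},s_h)$ with $\pi_{s_{h-1}}>\pi_{s_h}$. For $0\le h\le i\le n$, $dp(h,i)$ is the pair $(d(h,i),p(h,i))$, where $d(h,i)$ is the minimum number of drops over all sequences of $h+1$ indices $0=s_0<s_1<\cdots<s_h\le i$, and $p(h,i)$ is the minimum of $\pi_{s_h}$ over all such sequences having exactly $d(h,i)$ drops. Let $DP_i=\{dp(h,i)\mid 0\le h\le i\}$. Pairs are compared lexicographically. *)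

(* Defs.v *)
From HB Require Import structures.
From mathcomp Require Import all_boot all_order all_algebra.
From mathcomp Require Import reals.
Set Implicit Arguments. Unset Strict Implicit. Unset Printing Implicit Defensive.
Import Order.TTheory GRing.Theory Num.Theory.
Local Open Scope ring_scope.

Definition frac (R : realType) (x : R) : R := x - (Num.floor x)%:~R.

Definition key_lt (R : realType) (x : nat -> R) (k l : nat) : bool :=
  (frac (x k) < frac (x l)) ||
  ((frac (x k) == frac (x l)) &&
   ((- x k < - x l) || ((- x k == - x l) && (k < l)%N))).

Definition valid_seq (s : nat -> nat) (h i : nat) : Prop :=
  s 0%N = 0%N /\ (forall k, (k < h)%N -> (s k < s k.+1)%N) /\ (s h <= i)%N.

Definition drops (pi : nat -> nat) (s : nat -> nat) (h : nat) : nat :=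
  (\sum_(1 <= k < h.+1) (pi (s k) < pi (s k.-1))%N)%N.

Definition is_d (pi : nat -> nat) (h i D : nat) : Prop :=
  (exists s, valid_seq s h i /\ drops pi s h = D) /\
  (forall s, valid_seq s h i -> (D <= drops pi s h)%N).

Definition is_dp (pi : nat -> nat) (h i D P : nat) : Prop :=
  is_d pi h i D /\
  (exists s, [/\ valid_seq s h i, drops pi s h = D & pi (s h) = P]) /\
  (forall s, valid_seq s h i -> drops pi s h = D -> (P <= pi (s h))%N).

Definition inDP (pi : nat -> nat) (i : nat) (d p : int) : Prop :=
  exists h D P, [/\ (h <= i)%N, is_dp pi h i D P, d = D%:Z & p = P%:Z].

(* Main.v *)
Require Import Defs.
From HB Require Import structures.
From mathcomp Require Import all_boot all_order all_algebra.
From mathcomp Require Import reals.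
From mathcomp Require Import zify.
Import Order.TTheory GRing.Theory Num.Theory.
Local Open Scope nat_scope.

Definition Ek (N r x : nat) : nat := (x %/ N + (r < x %% N)) * N + r.

Fixpoint gk (N : nat) (pi : nat -> nat) (i : nat) (h : nat) : nat :=
  match i with
  | 0 => pi 0
  | i'.+1 => if h == 0 then pi 0 else
             if h <= i' then minn (gk N pi i' h) (Ek N (pi i'.+1) (gk N pi i' h.-1))
             else Ek N (pi i'.+1) (gk N pi i' h.-1)
  end.

Definition val N pi s h := drops pi s h * N + pi (s h).

Lemma drops0 pi s : drops pi s 0 = 0.
Proof. by rewrite /drops big_geq. Qed.

Lemma dropsS pi s h : drops pi s h.+1 = drops pi s h + (pi (s h.+1) < pi (s h)).
Proof. by rewrite /drops big_nat_recr. Qed.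

Lemma drops_ext pi s t h : (forall k, k <= h -> s k = t k) -> drops pi s h = drops pi t h.
Proof.
move=> H; rewrite /drops; apply: eq_big_nat => k /andP [H1 H2].
rewrite !H //; case: k H1 H2 => //= k _ H2; lia.
Qed.

Lemma valid_ge s h i : valid_seq s h i -> forall k, k <= h -> k <= s k.
Proof.
move=> [H0 [Hinc _]]; elim=> [|k IH] Hk //.
have := Hinc k Hk. have := IH (ltnW Hk). lia.
Qed.

Lemma valid_le s h i : valid_seq s h i -> forall k, k <= h -> s k <= i.
Proof.
move=> [H0 [Hinc Hh]] k Hk.
have: forall j, j <= h - k -> s (h - j) <= i.
  elim=> [|j IH] Hj; first by rewrite subn0.
  have := Hinc (h - j.+1). have := IH (ltnW Hj).
  have -> : (h - j.+1).+1 = h - j by lia.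
  move=> A B; have := B (ltac:(lia)). lia.
move/(_ (h - k) (leqnn _)). by have -> : h - (h - k) = k by lia.
Qed.

Arguments valid_ge {s h i}.
Arguments valid_le {s h i}.

Lemma E_val N r D q : 0 < N -> q < N -> Ek N r (D * N + q) = (D + (r < q)) * N + r.
Proof.
move=> HN Hq; rewrite /Ek divnMDl // modnMDl divn_small // modn_small //.
by rewrite addn0.
Qed.

Lemma E_mono N r x y : 0 < N -> x <= y -> Ek N r x <= Ek N r y.
Proof.
move=> HN Hxy; rewrite /Ek leq_add2r leq_mul2r; apply/orP; right.
rewrite (divn_eq x N) (divn_eq y N) in Hxy.
have := ltn_pmod x HN; have := ltn_pmod y HN.
set a := x %/ N; set b := x %% N; set c := y %/ N; set d := y %% N.
move=> Hd Hb.
have [Hac|Hac] := ltnP a c.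
  have : a.+1 <= c by []. case: (r < b); case: (r < d); lia.
have Hca : c <= a by [].
have : a <= c. { have : a * N + b < (c.+1) * N by apply: leq_ltn_trans Hxy _; rewrite mulSn; lia. nia. }
move=> Hac2. have Ea : a = c by lia. subst a.
have : b <= d by lia. move=> Hbd.
case: (ltnP r b) => Hrb; case: (ltnP r d) => Hrd //=; lia.
Qed.

Lemma valS pi N s h : 0 < N -> pi (s h) < N ->
  Ek N (pi (s h.+1)) (val N pi s h) = val N pi s h.+1.
Proof. move=> HN Hp; by rewrite /val E_val // dropsS. Qed.

Lemma gk0 N pi i : gk N pi i 0 = pi 0.
Proof. by case: i. Qed.

Lemma g_lower N pi n (hN : 0 < N) (hpiN : forall k, k <= n -> pi k < N) i :
  i <= n -> forall h s, valid_seq s h i -> gk N pi i h <= val N pi s h.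
Proof.
elim: i => [|i IH] Hi h s Hs.
  have := valid_ge Hs _ (leqnn h); have := valid_le Hs _ (leqnn h) => A B.
  have Eh : h = 0 by lia. subst h. case: Hs => [H0 _].
  by rewrite /= /val drops0 H0.
case: h Hs => [|h] Hs.
  by rewrite gk0 /val drops0; case: Hs => ->.
have Hsh := valid_le Hs _ (leqnn _).
have Hge := valid_ge Hs _ (leqnn _).
case: Hs => [H0 [Hinc Hle]].
have [Hlt|Heq] : s h.+1 <= i \/ s h.+1 = i.+1 by lia.
  have Hv : valid_seq s h.+1 i by [].
  have Hhi : h.+1 <= i by lia.
  rewrite /= Hhi; apply: leq_trans (geq_minl _ _) _; exact: IH (ltnW Hi) _ _ Hv.
have Hv : valid_seq s h i.
  split=> //; split; first by move=> k Hk; apply: Hinc; lia.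
  have := Hinc h (ltnSn _); lia.
have Hpi : pi (s h) < N by apply: hpiN; have := valid_le Hv _ (leqnn _); lia.
have Hb : Ek N (pi i.+1) (gk N pi i h) <= val N pi s h.+1.
  rewrite -valS // Heq; apply: E_mono => //; exact: IH (ltnW Hi) _ _ Hv.
rewrite /=; case: ifP => _ //; apply: leq_trans (geq_minr _ _) Hb.
Qed.

Lemma g_wit N pi n (hN : 0 < N) (hpiN : forall k, k <= n -> pi k < N) i :
  i <= n -> forall h, h <= i -> exists s, valid_seq s h i /\ val N pi s h = gk N pi i h.
Proof.
elim: i => [|i IH] Hi h Hh.
  have Eh : h = 0 by lia. subst h.
  exists (fun _ => 0); split; first by split=> //; split.
  by rewrite /val drops0.
case: h Hh => [|h] Hh.
  exists (fun _ => 0); split; first by split=> //; split.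
  by rewrite /val drops0 gk0.
have [s' [Hv' Hval']] := IH (ltnW Hi) h (ltac:(lia)).
set t := fun k => if k == h.+1 then i.+1 else s' k.
have Ht : valid_seq t h.+1 i.+1.
  case: Hv' => [H0 [Hinc Hle]].
  split; first by rewrite /t.
  split; last by rewrite /t eqxx.
  move=> k Hk; rewrite /t.
  have -> : (k == h.+1) = false by apply/negbTE; rewrite neq_ltn Hk.
  case: eqP => [Ek'|Nk].
    have Ekh : k = h by lia.
    subst k; lia.
  apply: Hinc; lia.
have Htv : val N pi t h.+1 = Ek N (pi i.+1) (gk N pi i h).
  have Et : forall k, k <= h -> t k = s' k.
    move=> k Hk; rewrite /t; have -> : (k == h.+1) = false by apply/negbTE; rewrite neq_ltn ltnS Hk.
    done.
  rewrite -Hval' /val dropsS (drops_ext pi t s' h Et) (Et h (leqnn h)).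
  have -> : t h.+1 = i.+1 by rewrite /t eqxx.
  rewrite E_val //.
  apply: hpiN. have := valid_le Hv' _ (leqnn _). lia.
rewrite /=. case: ifP => Hhi.
  rewrite /minn; case: ifP => Hc; last by exists t.
  have [s [Hv Hval]] := IH (ltnW Hi) h.+1 Hhi.
  exists s; split; last by [].
  case: Hv => [A [B C]]; split=> //; split=> //; lia.
by exists t.
Qed.

Arguments g_wit {N pi n} hN hpiN {i} Hi {h} Hh.
Arguments g_lower {N pi n} hN hpiN {i} Hi {h s} Hs.

Lemma g_mono N pi n (hN : 0 < N) (hpiN : forall k, k <= n -> pi k < N)
  (hinj : forall k l, k <= n -> l <= n -> pi k = pi l -> k = l) i :
  i <= n -> forall h, h < i -> gk N pi i h < gk N pi i h.+1.
Proof.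
move=> Hi h Hh.
have [s [Hv Hval]] := g_wit hN hpiN Hi Hh.
have Hv2 : valid_seq s h i.
  case: Hv => [A [B C]]; split=> //; split; first by move=> k Hk; apply: B; lia.
  have := B h (ltnSn _); lia.
apply: leq_ltn_trans (g_lower hN hpiN Hi Hv2) _.
rewrite -Hval /val dropsS.
have Hl1 := valid_le Hv h.+1 (leqnn _).
have Hl0 := valid_le Hv2 h (leqnn _).
have Hlt : s h < s h.+1 by case: Hv => [_ [B _]]; apply: B.
have P0 := hpiN (s h) ltac:(lia). have P1 := hpiN (s h.+1) ltac:(lia).
case: (ltnP (pi (s h.+1)) (pi (s h))) => Hc.
  have E1 : forall a, a + true = a.+1 by move=> a; exact: addn1.
  rewrite E1 mulSn; lia.
have : pi (s h) != pi (s h.+1).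
  apply/eqP => E; have := hinj (s h) (s h.+1) ltac:(lia) ltac:(lia) E; lia.
have E0 : forall a, a + false = a by move=> a; exact: addn0.
rewrite E0; lia.
Qed.

Lemma g_mod N pi n (hN : 0 < N) (hpiN : forall k, k <= n -> pi k < N) i :
  i <= n -> forall h, h <= i -> exists2 e, e <= i & gk N pi i h %% N = pi e.
Proof.
move=> Hi h Hh; have [s [Hv Hval]] := g_wit hN hpiN Hi Hh.
exists (s h); first exact: valid_le Hv h (leqnn _).
rewrite -Hval /val modnMDl modn_small //; apply: hpiN.
have := valid_le Hv h (leqnn _); lia.
Qed.

Lemma dp_to_g N pi n (hN : 0 < N) (hpiN : forall k, k <= n -> pi k < N) i h D P :
  i <= n -> h <= i -> is_dp pi h i D P -> gk N pi i h = D * N + P.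
Proof.
move=> Hi Hh [[_ HdL] [[s [Hs Hds Hps]] HpL]].
have HP : P < N by rewrite -Hps; apply: hpiN; have := valid_le Hs h (leqnn _); lia.
apply/eqP; rewrite eqn_leq; apply/andP; split.
  by have := g_lower hN hpiN Hi Hs; rewrite /val Hds Hps.
have [t [Ht Hval]] := g_wit hN hpiN Hi Hh.
rewrite -Hval /val.
have := HdL t Ht.
rewrite leq_eqVlt => /orP [/eqP E|Lt].
  have := HpL t Ht (esym E). rewrite -E. lia.
have : (D.+1) * N <= drops pi t h * N by rewrite leq_mul2r Lt orbT.
rewrite mulSn; lia.
Qed.

Lemma g_to_dp N pi n (hN : 0 < N) (hpiN : forall k, k <= n -> pi k < N) i h :
  i <= n -> h <= i -> is_dp pi h i (gk N pi i h %/ N) (gk N pi i h %% N).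
Proof.
move=> Hi Hh.
have [t [Ht Hval]] := g_wit hN hpiN Hi Hh.
have Hpt : pi (t h) < N by apply: hpiN; have := valid_le Ht h (leqnn _); lia.
have Ed : gk N pi i h %/ N = drops pi t h by rewrite -Hval /val divnMDl // divn_small // addn0.
have Ep : gk N pi i h %% N = pi (t h) by rewrite -Hval /val modnMDl modn_small.
rewrite Ed Ep.
split; first split.
- by exists t.
- move=> s Hs; have := g_lower hN hpiN Hi Hs; rewrite -Hval /val => L.
  have Hps : pi (s h) < N by apply: hpiN; have := valid_le Hs h (leqnn _); lia.
  nia.
- split; first by exists t.
  move=> s Hs Hd; have := g_lower hN hpiN Hi Hs; rewrite -Hval /val Hd; lia.
Qed.

Lemma klt N a b c d : b < N -> d < N -> a * N + b < c * N + d -> a < c \/ (a = c /\ b < d).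
Proof. move=> *. have [H|H|H] := ltngtP a c; [by left | nia | right; subst; lia]. Qed.
Lemma kle N a b c d : b < N -> d < N -> a * N + b <= c * N + d -> a < c \/ (a = c /\ b <= d).
Proof. move=> *. have [H|H|H] := ltngtP a c; [by left | nia | right; subst; lia]. Qed.
Lemma klt2 N a b c d : b < N -> (a < c \/ (a = c /\ b < d)) -> a * N + b < c * N + d.
Proof. move=> H [H1|[H1 H2]]; [nia | subst; lia]. Qed.
Lemma kle2 N a b c d : b < N -> (a < c \/ (a = c /\ b <= d)) -> a * N + b <= c * N + d.
Proof. move=> H [H1|[H1 H2]]; [nia | subst; lia]. Qed.
Lemma keq N a b c d : b < N -> d < N -> a * N + b = c * N + d -> a = c /\ b = d.
Proof.
move=> H1 H2 E. have := @kle N a b c d H1 H2 (eq_leq E). have := @kle N c d a b H2 H1 (eq_leq (esym E)). lia.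
Qed.
Lemma kmod N a b : b < N -> (a * N + b) %% N = b.
Proof. by move=> H; rewrite modnMDl modn_small. Qed.
Lemma decK N x : 0 < N -> exists a b, b < N /\ x = a * N + b.
Proof. move=> HN; exists (x %/ N), (x %% N); split; [exact: ltn_pmod | exact: divn_eq]. Qed.

Definition Inv N p0 (G : nat -> nat) m := forall h d p, h <= m -> p < N ->
  G h = d.+1 * N + p -> (0 < d) || (p0 <= p) -> exists2 h', h' <= m & G h' = d * N + p.
Arguments decK {N} x HN.
Arguments klt {N a b c d}.
Arguments kle {N a b c d}.
Arguments klt2 {N a b c d}.
Arguments kle2 {N a b c d}.
Arguments keq {N a b c d}.

Lemma step N p0 r m (G G' : nat -> nat) :
  0 < N -> r < N -> p0 < N ->
  G 0 = p0 -> G' 0 = p0 ->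
  (forall j, j <= m -> G j %% N <> r) ->
  (forall a b, a < b -> b <= m -> G a < G b) ->
  (forall h, 0 < h -> h <= m -> G' h = minn (G h) (Ek N r (G h.-1))) ->
  G' m.+1 = Ek N r (G m) ->
  Inv N p0 G m -> Inv N p0 G' m.+1.
Proof.
move=> HN Hr Hp0 G0 G'0 Gr mono rec1 rec2 IH h d p Hh HpN HG' Hc.
have mle : forall a b, a <= b -> b <= m -> G a <= G b.
  move=> a b; rewrite leq_eqVlt => /orP [/eqP -> //|Hab] Hb; exact: ltnW (mono _ _ Hab Hb).
have minv : forall a b, a <= m -> b <= m -> G a < G b -> a < b.
  move=> a b Ha Hb H; rewrite ltnNge; apply/negP => Hba; have := mle _ _ Hba Ha; lia.
have nob : forall k j, 0 < k -> k <= m -> j <= m -> G k.-1 < G j -> G j < G k -> False.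
  move=> k j Hk Hkm Hjm H1 H2; case: (ltnP j k) => Hjk.
    have := mle j k.-1 ltac:(lia) ltac:(lia); lia.
  have := mle k j Hjk Hjm; lia.
have lvl0 : forall j y, j <= m -> G j = 0 * N + y -> p0 <= y.
  move=> j y Hj E; have := mle 0 j (leq0n _) Hj; rewrite G0 E; lia.
have GrE : forall j a b, j <= m -> b < N -> G j = a * N + b -> b <> r.
  move=> j a b Hj Hb E; have := Gr j Hj; by rewrite E kmod.
case: h Hh HG' => [|h] Hh HG'.
  rewrite G'0 mulSn in HG'; lia.
have hle : h <= m by lia.
have [c [y [Hy EGh]]] := decK (G h) HN.
have Ebig : Ek N r (G h) = (c + (r < y)) * N + r by rewrite EGh E_val.
have G'h : G' h.+1 = Ek N r (G h) \/ (h.+1 <= m /\ G' h.+1 = G h.+1).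
  case: (ltnP m h.+1) => Hm.
    have Ehm : h = m by lia. subst h; left; exact: rec2.
  rewrite rec1 //= /minn; case: ifP => _; [right; split => // | by left].
case: (eqVneq p r) => [Epr|Npr].
- subst p.
  have HE : Ek N r (G h) = d.+1 * N + r.
    case: G'h => [<- //|[Hm E]]; exfalso.
    have := Gr h.+1 Hm; rewrite -E HG' kmod //.
  rewrite Ebig in HE; have [Hcd _] := keq Hr Hr HE.
  case: (ltnP r y) => Hry.
  +
    have Ec : c = d by move: Hcd; rewrite Hry; lia.
    subst c.
    have exP : exists j, (j <= m) && (d * N + r < G j).
      exists h; rewrite hle EGh /=; apply: klt2 => //; right; split => //.
    case: (ex_minnP exP) => k /andP [Hkm Hk] kmin.
    have Hkh : k <= h by apply: kmin; rewrite hle EGh /=; apply: klt2 => //; right; split => //.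
    case: k Hkm Hk kmin Hkh => [|k'] Hkm Hk kmin Hkh.
      exfalso; rewrite G0 in Hk; move: Hc => /orP [Hd|Hpr]; [nia | lia].
    have Hk'm : k' <= m by lia.
    have [c' [y' [Hy' E']]] := decK (G k') HN.
    have Ny' := GrE k' c' y' Hk'm Hy' E'.
    have HGk' : G k' < d * N + r.
      have : ~~ ((k' <= m) && (d * N + r < G k')).
        apply/negP => /kmin; lia.
      rewrite Hk'm /= -leqNgt E' => H.
      apply: klt2 => //.
      have := kle Hy' Hr H; lia.
    have [a [s [Hs EGk]]] := decK (G k'.+1) HN.
    have Hkh2 := mle _ _ Hkh hle.
    rewrite EGk EGh in Hkh2; rewrite EGk in Hk.
    have := klt Hr Hs Hk; have := kle Hs Hy Hkh2 => A B.
    have Ea : a = d by lia. subst a.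
    have Hrs : r < s by lia.
    exists k'.+1; first lia.
    rewrite rec1 //=.
    have -> : Ek N r (G k') = d * N + r.
      rewrite E' E_val //.
      rewrite E' in HGk'; have [Hc'|[Hc' Hy'r]] := klt Hy' Hr HGk'.
        case Hry' : (r < y'); case Hcd' : (c'.+1 == d).
        * move/eqP: Hcd' => <-; lia.
        * exfalso. case: d Hc' Hcd' Hc EGk Hk Hkh2 HGk' Hcd HE HG' EGh Ebig exP kmin B A Hrs => [|d1] Hc' Hcd' Hc EGk Hk Hkh2 HGk' Hcd HE HG' EGh Ebig exP kmin B A Hrs; first lia.
          have Hc1 : (0 < d1) || (p0 <= s).
            case: d1 {Hc EGk Hk Hkh2 HGk' Hcd HE HG' EGh Ebig exP kmin B A} Hc' Hcd' => [|d1] Hc' Hcd' //=; lia.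
          have [k'' Hk''m EGk''] := IH _ d1 s Hkm Hs EGk Hc1.
          apply: (nob k'.+1 k'') => //=; [rewrite E' EGk''; apply: klt2 => //; lia | rewrite EGk'' EGk; apply: klt2 => //; lia].
        * exfalso. case: d Hc' Hcd' Hc EGk Hk Hkh2 HGk' Hcd HE HG' EGh Ebig exP kmin B A Hrs => [|d1] Hc' Hcd' Hc EGk Hk Hkh2 HGk' Hcd HE HG' EGh Ebig exP kmin B A Hrs; first lia.
          have Hyr : y' < r by lia.
          have Hc1 : (0 < d1) || (p0 <= s).
            case: d1 {Hc EGk Hk Hkh2 HGk' Hcd HE HG' EGh Ebig exP kmin B A} Hc' Hcd' => [|d1] Hc' Hcd' //=.
            have := lvl0 k' y' Hk'm ltac:(rewrite E'; lia). lia.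
          have [k'' Hk''m EGk''] := IH _ d1 s Hkm Hs EGk Hc1.
          apply: (nob k'.+1 k'') => //=; [rewrite E' EGk''; apply: klt2 => //; lia | rewrite EGk'' EGk; apply: klt2 => //; lia].
        * exfalso. case: d Hc' Hcd' Hc EGk Hk Hkh2 HGk' Hcd HE HG' EGh Ebig exP kmin B A Hrs => [|d1] Hc' Hcd' Hc EGk Hk Hkh2 HGk' Hcd HE HG' EGh Ebig exP kmin B A Hrs; first lia.
          have Hyr : y' < r by lia.
          have Hc1 : (0 < d1) || (p0 <= s).
            case: d1 {Hc EGk Hk Hkh2 HGk' Hcd HE HG' EGh Ebig exP kmin B A} Hc' Hcd' => [|d1] Hc' Hcd' //=.
            have := lvl0 k' y' Hk'm ltac:(rewrite E'; lia). lia.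
          have [k'' Hk''m EGk''] := IH _ d1 s Hkm Hs EGk Hc1.
          apply: (nob k'.+1 k'') => //=; [rewrite E' EGk''; apply: klt2 => //; lia | rewrite EGk'' EGk; apply: klt2 => //; lia].
      subst c'; have -> : (r < y') = false by apply/negbTE; rewrite -leqNgt; lia.
      by rewrite addn0.
    rewrite /minn EGk; case: ifP => // H; exfalso.
    have := klt Hs Hr H; lia.
  + have Nyr := GrE h c y hle Hy EGh.
    have Hyr : y < r by lia.
    have Hrl : (r < y) = false by apply/negbTE; rewrite -leqNgt; lia.
    rewrite Hrl addn0 in Hcd; subst c.
    have [j0 Hj0m [Hj0a Hj0b]] : exists2 j0, j0 <= m & d * N <= G j0 /\ G j0 < d * N + r.
      case Hc2 : ((0 < d) || (p0 <= y)).
        have [j0 Hj0 Ej0] := IH h d y hle Hy EGh Hc2.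
        exists j0 => //; rewrite Ej0; split; [lia | apply: klt2 => //; lia].
      move/negbT: Hc2; rewrite negb_or -leqNgt -ltnNge => /andP [Hd0 Hyp0].
      have Ed : d = 0 by lia. subst d.
      have Np0 : p0 <> r by have := GrE 0 0 p0 (leq0n _) Hp0 ltac:(rewrite G0; lia).
      exists 0; first lia. rewrite G0; move: Hc => /= Hc; lia.
    have exP : exists j, (j <= m) && (G j < d * N + r) by exists j0; rewrite Hj0m Hj0b.
    have bnd : forall j, (j <= m) && (G j < d * N + r) -> j <= m by move=> j /andP [].
    case: (ex_maxnP exP bnd) => k /andP [Hkm Hk] kmax.
    have Hj0k : j0 <= k by apply: kmax; rewrite Hj0m Hj0b.
    have HGk := mle _ _ Hj0k Hkm.
    have [a [z [Hz EGk]]] := decK (G k) HN.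
    rewrite EGk in Hk HGk.
    have := klt Hz Hr Hk; have := kle (ltac:(lia) : 0 < N) Hz (ltac:(lia) : d * N + 0 <= a * N + z) => A B.
    have Ea : a = d by lia. subst a.
    have Hzr : z < r by lia.
    have EE : Ek N r (G k) = d * N + r.
      rewrite EGk E_val //; have -> : (r < z) = false by apply/negbTE; rewrite -leqNgt; lia.
      by rewrite addn0.
    exists k.+1; first lia.
    case: (ltnP m k.+1) => Hm.
      have Ekm : k = m by lia. subst k; by rewrite rec2.
    rewrite rec1 //= EE /minn; case: ifP => // H; exfalso.
    have [a2 [w2 [Hw2 E2]]] := decK (G k.+1) HN.
    have Nw2 := GrE k.+1 a2 w2 Hm Hw2 E2.
    have : ~~ ((k.+1 <= m) && (G k.+1 < d * N + r)).
      apply/negP => /kmax; lia.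
    rewrite Hm /= -leqNgt => H2.
    rewrite E2 in H H2.
    have := klt Hw2 Hr H; have := kle Hr Hw2 H2; lia.
- have [Hm HGh1] : h.+1 <= m /\ G h.+1 = d.+1 * N + p.
    case: G'h => [E|[Hm E]]; last by rewrite -E.
    exfalso; move: E; rewrite HG' Ebig => E.
    have [_ E2] := keq HpN Hr E; by move/eqP: Npr.
  have [k Hkm EGk] := IH h.+1 d p Hm HpN HGh1 Hc.
  have Hkh : k <= h.
    have : k < h.+1 by apply: minv => //; rewrite EGk HGh1; apply: klt2 => //; lia.
    lia.
  exists k; first lia.
  case: k Hkm EGk Hkh => [|k'] Hkm EGk Hkh.
    by rewrite G'0 -G0.
  rewrite rec1 //= /minn; case: ifP => HH; first by [].
  exfalso.
  have Hk'm : k' <= m by lia.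
  have [c1 [y1 [Hy1 E1]]] := decK (G k') HN.
  have Ny1 := GrE k' c1 y1 Hk'm Hy1 E1.
  have HE1 : Ek N r (G k') < G k'.+1.
    move/negbT: HH; rewrite -leqNgt leq_eqVlt => /orP [/eqP E|//].
    exfalso; move: E; rewrite E1 E_val // EGk => E; have [_ E3] := keq Hr HpN E.
    by move/eqP: Npr; rewrite E3.
  rewrite E1 E_val // EGk in HE1.
  have Hlt1 : G k' < G k'.+1 by apply: mono.
  rewrite E1 EGk in Hlt1.
  have [c2 [w [Hw E2]]] := decK (G h) HN.
  have L1 := mle _ _ Hkh hle. rewrite EGk E2 in L1.
  have L2 : G h < G h.+1 by apply: mono.
  rewrite E2 HGh1 in L2.
  suff HE2 : Ek N r (G h) < G h.+1.
    have := rec1 h.+1 (ltn0Sn _) Hm; rewrite HG' /=; lia.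
  have below : forall j, j <= m -> G j < G k'.+1 -> G j <= G k'.
    move=> j Hj H; have := minv j k'.+1 Hj Hkm H => H2; apply: mle => //; lia.
  rewrite EGk in below.
  rewrite E2 E_val // HGh1.
  have T1 := klt Hy1 HpN Hlt1.
  have T2 := klt Hr HpN HE1.
  have T3 := kle HpN Hw L1.
  have T4 := klt Hw HpN L2.
  have Hc2 : (c2 = d /\ p <= w) \/ (c2 = d.+1 /\ w < p) by lia.
  case: T1 => [Hc1|[Ec1 Hy1p]].
  + case: d Hc1 Hc HG' HGh1 EGk below HE1 Hlt1 L1 L2 T2 T3 T4 Hc2 => [|d1] Hc1 Hc HG' HGh1 EGk below HE1 Hlt1 L1 L2 T2 T3 T4 Hc2; first lia.
    case: Hc2 => [[Ec2 Hpw]|[Ec2 Hwp]].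
    * subst c2. case Hrw : (r < w); last by rewrite addn0; apply: klt2 => //; lia.
      case Hry1 : (r < y1); case Ecd : (c1 == d1).
      - move/eqP: Ecd => Ecd; subst c1; rewrite Hry1 addn1 in T2.
        apply: klt2 => //; right; split; [by rewrite addn1 | lia].
      - exfalso.
        have Hc3 : (0 < d1) || (p0 <= w) by move/eqP: Ecd; lia.
        have [j Hj Ej] := IH h d1 w hle Hw E2 Hc3.
        have := below j Hj ltac:(rewrite Ej; apply: klt2 => //; lia).
        rewrite Ej E1 => H; have := kle Hw Hy1 H; move/eqP: Ecd; lia.
      - exfalso.
        have Hy1r : y1 < r by lia.
        case Hc3 : ((0 < d1) || (p0 <= w)).
          have [j Hj Ej] := IH h d1 w hle Hw E2 Hc3.
          have := below j Hj ltac:(rewrite Ej; apply: klt2 => //; lia).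
          rewrite Ej E1 => H; have := kle Hw Hy1 H; lia.
        have Ec1 : c1 = 0 by lia. subst c1.
        have := lvl0 k' y1 Hk'm ltac:(rewrite E1 //). lia.
      - exfalso.
        have Hy1r : y1 < r by lia.
        case Hc3 : ((0 < d1) || (p0 <= w)).
          have [j Hj Ej] := IH h d1 w hle Hw E2 Hc3.
          have := below j Hj ltac:(rewrite Ej; apply: klt2 => //; lia).
          rewrite Ej E1 => H; have := kle Hw Hy1 H; lia.
        have Ec1 : c1 = 0 by lia. subst c1.
        have := lvl0 k' y1 Hk'm ltac:(rewrite E1 //). lia.
    * exfalso. subst c2.
      have [j Hj Ej] := IH h d1.+1 w hle Hw E2 (ltac:(by [])).
      have := below j Hj ltac:(rewrite Ej; apply: klt2 => //; lia).
      rewrite Ej E1 => H; have := kle Hw Hy1 H; lia.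
  + subst c1.
    have Hry1 : (r < y1) = false.
      apply/negbTE/negP => H; rewrite H in T2; lia.
    rewrite Hry1 addn0 in T2.
    have Hrp : r < p by lia.
    have Hy1r : y1 < r by move: Hry1 => /negbT; rewrite -leqNgt; lia.
    case: Hc2 => [[Ec2 Hpw]|[Ec2 Hwp]].
    * subst c2; have -> : (r < w) = true by apply/idP; lia.
      apply: klt2 => //; right; split; [by rewrite addn1 | lia].
    * subst c2.
      have Hwr : w < r.
        case Hc3 : ((0 < d) || (p0 <= w)).
          have [j Hj Ej] := IH h d w hle Hw E2 Hc3.
          have := below j Hj ltac:(rewrite Ej; apply: klt2 => //; lia).
          rewrite Ej E1 => H; have := kle Hw Hy1 H; lia.
        have Ed : d = 0 by lia. subst d.
        have := lvl0 k' y1 Hk'm ltac:(rewrite E1 //). lia.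
      have -> : (r < w) = false by apply/negbTE; rewrite -leqNgt; lia.
      rewrite addn0; apply: klt2 => //; lia.
Qed.

Arguments g_mod {N pi n} hN hpiN {i} Hi {h} Hh.
Arguments g_mono {N pi n} hN hpiN hinj {i} Hi h Hh.

Lemma chain_mono (G : nat -> nat) m :
  (forall h, h < m -> G h < G h.+1) -> forall a b, a < b -> b <= m -> G a < G b.
Proof.
move=> H a b Hab Hb.
have : forall k, a + k.+1 <= m -> G a < G (a + k.+1).
  elim=> [|k IH] Hk.
    have Ha : a < m by lia.
    have := H a Ha. rewrite addn1. move=> X; exact X.
  apply: ltn_trans (IH ltac:(lia)) _. have Ha : a + k.+1 < m by lia.
  have := H _ Ha. rewrite [a + k.+2]addnS. move=> X; exact X.
move/(_ (b - a).-1). have -> : a + (b - a).-1.+1 = b by lia. by apply; lia.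
Qed.

Lemma g_inv N pi n (hN : 0 < N) (hpiN : forall k, k <= n -> pi k < N)
  (hinj : forall k l, k <= n -> l <= n -> pi k = pi l -> k = l) i :
  i <= n -> Inv N (pi 0) (gk N pi i) i.
Proof.
elim: i => [|i IH] Hi.
  move=> h d p Hh HpN /= E. have := hpiN 0 (leq0n _). rewrite E mulSn. lia.
apply: (@step N (pi 0) (pi i.+1) i (gk N pi i) (gk N pi i.+1)).
- exact: hN.
- exact: hpiN.
- exact: hpiN.
- exact: gk0.
- exact: gk0.
- move=> j Hj; have [e He Ee] := g_mod hN hpiN (ltnW Hi) Hj.
  move=> E; rewrite E in Ee; have := hinj e i.+1 ltac:(lia) Hi (esym Ee); lia.
- apply: chain_mono => h Hh; exact: (g_mono hN hpiN hinj (ltnW Hi) h Hh).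
- move=> h Hh0 Hh /=; rewrite Hh; case: h Hh0 Hh => //.
- by rewrite /= ltnn.
- exact: IH (ltnW Hi).
Qed.

Arguments g_inv {N pi n} hN hpiN hinj {i} Hi.
Arguments dp_to_g {N pi n} hN hpiN {i h D P} Hi Hh Hdp.
Arguments g_to_dp {N pi n} hN hpiN {i h} Hi Hh.

Local Open Scope ring_scope.

Theorem lemma10 (R : realType) (n : nat) (x : nat -> R) (pi : nat -> nat)
  (hx : forall k, (k <= n)%N -> x k <= x k.+1)
  (hpi_range : forall k, (k <= n.+1)%N -> (pi k <= n.+1)%N)
  (hpi_inj : forall k l, (k <= n.+1)%N -> (l <= n.+1)%N -> pi k = pi l -> k = l)
  (hpi : forall k l, (k < l)%N -> (l <= n.+1)%N -> (pi l < pi k)%N = key_lt x k l)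
  (i : nat) (hi : (i <= n)%N) (d p : int) :
  inDP pi i (d + 1) p ->
  ((0 < d) || ((d == 0) && ((pi 0%N)%:Z <= p))) ->
  inDP pi i d p.
Proof.
move=> [h [D [P [Hh Hdp Ed Ep]]]] Hc.
have hN : (0 < n.+2)%N by [].
have hpiN : forall k, (k <= n)%N -> (pi k < n.+2)%N.
  move=> k Hk; have := hpi_range k ltac:(lia); lia.
have hinj : forall k l, (k <= n)%N -> (l <= n)%N -> pi k = pi l -> k = l.
  move=> k l Hk Hl; apply: hpi_inj; lia.
have HP : (P < n.+2)%N.
  case: Hdp => [_ [[s [Hs _ Hps]] _]]; rewrite -Hps; apply: hpiN.
  have := valid_le Hs h (leqnn _); lia.
case: d Ed Hc => [dn|dn] Ed Hc; last by move: Hc.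
have ED : D = dn.+1 by lia.
subst D p.
have Hc' : ((0 < dn) || (pi 0 <= P))%N.
  move: Hc => /orP [H|/andP [H1 H2]]; apply/orP; [left | right]; lia.
have EG := dp_to_g hN hpiN hi Hh Hdp.
have [h' Hh' EG'] := g_inv hN hpiN hinj hi h dn P Hh HP EG Hc'.
exists h', dn, P; split => //.
have := g_to_dp hN hpiN hi Hh'.
rewrite EG' divnMDl // modnMDl divn_small // modn_small // addn0.
by move=> X.
Qed.
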